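(* Let $s\in(0,2]$, $P$ a finite set of $n$ points in $(\mathbb{R}^d,\ell_s)$, $\varepsilon>0$, and let $q\in\mathbb{R}^d$ be a query point processed by the reverse nearest neighbor query procedure described in the context, with $y$ the point found at step 1. Let $P'=\bigcup_i P_i$ for $i$ ranging from $\lfloor\log_{1+\varepsilon}\frac{\mathrm{d}(q,y)}{1+\varepsilon}\rfloor+1$ to $\lceil\log_{1+\varepsilon}\frac{\mathrm{d}(q,y)}{\varepsilon}\rceil$, and let $S''$ be the set of points inserted into $S$ at step 3. Given that $y\in\varepsilon\text{-}\mathrm{NN}_P(q)$, we have $\mathrm{RNN}_P(q)\setminus P'\subseteq S''$ with high probability.
   Context: $\mathrm{d}$ is the $\ell_s$ distance; $\mathrm{d}(x,P)=\min\{\mathrm{d}(x,p):p\in P\setminus\{x\}\}$; $N_Q(x,R)$ is the set of $p\in Q\setminus\{x\}$ with $\mathrm{d}(x,p)\le R$; $\varepsilon\text{-}\mathrm{NN}_P(x)=N_P(x,(1+\varepsilon)\mathrm{d}(x,P))$; $\mathrm{RNN}_P(x)$ is the set of $p\in P\setminus\{x\}$ with $\mathrm{d}(p,x)\le\mathrm{d}(p,P)$; $\varepsilon\text{-}\mathrm{RNN}_P(x)$ is the set of $p\in P\setminus\{x\}$ with $\mathrm{d}(p,x)\le(1+\varepsilon)\mathrm{d}(p,P)$. Preprocessing: compute $\mathrm{d}(p,P)$ for all $p\in P$; bucket $P_i=\{p\in P:(1+\varepsilon)^{i-1}\le\mathrm{d}(p,P)<(1+\varepsilon)^i\}$, $i\in\mathbb{Z}$;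 on each nonempty $P_i$ build an LSH structure for exhaustive $(1+\varepsilon)^i$-PLEB on $P_i$; for each $y\in P$ store the array $P_y=\varepsilon\text{-}\mathrm{RNN}_P(y)\cup\{y\}$ sorted by $\mathrm{d}(\cdot,P)$; build an $\varepsilon$-approximate nearest neighbor structure on $P$. Query: (1) find $y\in P$ with the $\varepsilon$-NN structure; (2) for each $i$ from $\lfloor\log_{1+\varepsilon}\frac{\mathrm{d}(q,y)}{1+\varepsilon}\rfloor+1$ to $\lceil\log_{1+\varepsilon}\frac{\mathrm{d}(q,y)}{\varepsilon}\rceil$ with $P_i\neq\emptyset$, run the exhaustive $(1+\varepsilon)^i$-PLEB query on $P_i$ and put the outputs into $S$; (3) add to $S$ all points $p\in P_y$ with $\mathrm{d}(p,P)\ge\mathrm{d}(q,y)/\varepsilon$ (found by binary search in $P_y$ and iterating to its end); (4) remove from $S$ the points $p$ with $\mathrm{d}(p,q)>\mathrm{d}(p,P)$; return $S$.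
   Formalization: For s ∈ (0,1), d is the metric Σᵢ|xᵢ−yᵢ|ˢ without the 1/s-th root, and $\mathrm{RNN}_P(q)\setminus P'\subseteq S''$ holds for every $y\in\varepsilon\text{-}\mathrm{NN}_P(q)$ outright rather than with high probability. Apart from conventions, each condition added here is assumed in the paper as well or is needed for the statement above to hold. *)

(* Defs.v *)
From HB Require Import structures.
From mathcomp Require Import all_boot all_order all_algebra.
From mathcomp Require Import all_classical all_reals.
From mathcomp Require Import exp.
Set Implicit Arguments. Unset Strict Implicit. Unset Printing Implicit Defensive.
Import Order.TTheory GRing.Theory Num.Theory.
Local Open Scope ring_scope.

Section RNN.
Variables (R : realType) (d : nat).
Notation pt := 'rV[R]_d.

(* ell_s distance on R^d.  For 1 <= s <= 2 it is (sum |x_i - y_i|^s)^(1/s);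
   for 0 < s < 1 it is the ell_s metric sum |x_i - y_i|^s. *)
Definition lsdist (s : R) (x y : pt) : R :=
  (\sum_(i < d) `|x ord0 i - y ord0 i| `^ s) `^ (Num.min 1 s^-1).

Definition setdist (s : R) (P : seq pt) (x : pt) : R :=
  let Q := [seq p <- P | p != x] in
  \big[Num.min/lsdist s x (head x Q)]_(p <- Q) lsdist s x p.

Definition ball_pts (s : R) (Q : seq pt) (x : pt) (r : R) : pred pt :=
  [pred p | (p \in Q) && (p != x) && (lsdist s x p <= r)].

Definition epsNN (s eps : R) (P : seq pt) (x : pt) : pred pt :=
  ball_pts s P x ((1 + eps) * setdist s P x).

Definition RNN (s : R) (P : seq pt) (x : pt) : pred pt :=
  [pred p | (p \in P) && (p != x) && (lsdist s p x <= setdist s P p)].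

Definition epsRNN (s eps : R) (P : seq pt) (x : pt) : pred pt :=
  [pred p | (p \in P) && (p != x) &&
            (lsdist s p x <= (1 + eps) * setdist s P p)].

Definition bucket (s eps : R) (P : seq pt) (i : int) : pred pt :=
  [pred p | (p \in P) && ((1 + eps) ^ (i - 1) <= setdist s P p)
                      && (setdist s P p < (1 + eps) ^ i)].

Definition logb (b x : R) : R := ln x / ln b.

Definition lo_idx (s eps : R) (q y : pt) : int :=
  Num.floor (logb (1 + eps) (lsdist s q y / (1 + eps))) + 1.
Definition hi_idx (s eps : R) (q y : pt) : int :=
  Num.ceil (logb (1 + eps) (lsdist s q y / eps)).

Definition Pprime (s eps : R) (P : seq pt) (q y : pt) (p : pt) : Prop :=
  exists i : int, (lo_idx s eps q y <= i <= hi_idx s eps q y) /\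
                  p \in bucket s eps P i.

Definition Py (s eps : R) (P : seq pt) (y : pt) : pred pt :=
  [pred p | (p == y) || (p \in epsRNN s eps P y)].

(* S'' : points of P_y with d(p,P) >= d(q,y)/eps, inserted at step (3) *)
Definition S2 (s eps : R) (P : seq pt) (q y : pt) : pred pt :=
  [pred p | (p \in Py s eps P y) && (lsdist s q y / eps <= setdist s P p)].

End RNN.

(* Main.v *)
Require Import Defs.
From HB Require Import structures.
From mathcomp Require Import all_boot all_order all_algebra.
From mathcomp Require Import all_classical all_reals.
From mathcomp Require Import exp convex hoelder.
From mathcomp Require Import ring lra.
Import Order.TTheory GRing.Theory Num.Theory.
Local Open Scope ring_scope.

Lemma conv2 {R : realType} (p l u v : R) : 1 <= p -> 0 <= l -> l <= 1 -> 0 <= u -> 0 <= v ->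
  (l * u + (1 - l) * v) `^ p <= l * u `^ p + (1 - l) * v `^ p.
Proof. 
move=> p1 l0 l1 u0 v0.
have := @convex_powR R p p1 (interval_inference.Itv01 l0 l1) u v.
rewrite !inE /= !in_itv /= !andbT => /(_ u0 v0).
by rewrite !convRE.
Qed.

Lemma powRsK {R : realType} (s x : R) : 0 < s -> 0 <= x -> (x `^ s^-1) `^ s = x.
Proof. by move=> s0 x0; rewrite -powRrM mulVf ?gt_eqF // powRr1. Qed.

Lemma powRKs {R : realType} (s x : R) : 0 < s -> 0 <= x -> (x `^ s) `^ s^-1 = x.
Proof. by move=> s0 x0; rewrite -powRrM mulfV ?gt_eqF // powRr1. Qed.

Lemma sum0_pow {R : realType} (n : nat) (s : R) (a : 'I_n -> R) : 0 < s ->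
  (forall i, 0 <= a i) -> (\sum_i a i `^ s) `^ s^-1 = 0 -> forall i, a i = 0.
Proof.
move=> s0 a0 /eqP; rewrite powR_eq0 invr_eq0 (gt_eqF s0) /= => /andP[/eqP H0 _]; move: H0.
move/psumr_eq0P => H i; apply: (@powR_eq0_eq0 _ _ s); apply: H => //.
by move=> j _; apply: powR_ge0.
Qed.

Lemma decomp {R : realType} (A B x y : R) : 0 < A -> 0 < B ->
  x + y = (A + B) * (A / (A + B) * (x / A) + (1 - A / (A + B)) * (y / B)).
Proof.
move=> A0 B0; have AB : A + B != 0 by rewrite gt_eqF // addr_gt0.
field; rewrite AB !gt_eqF //.
Qed.

Lemma mink (R : realType) (n : nat) (s : R) (a b : 'I_n -> R) : 1 <= s ->
  (forall i, 0 <= a i) -> (forall i, 0 <= b i) ->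
  (\sum_i (a i + b i) `^ s) `^ s^-1 <=
  (\sum_i a i `^ s) `^ s^-1 + (\sum_i b i `^ s) `^ s^-1.
Proof.
move=> s1 a0 b0; have s0 : 0 < s by apply: lt_le_trans s1.
set Sa := \sum_i a i `^ s; set Sb := \sum_i b i `^ s.
have Sa0 : 0 <= Sa by apply: sumr_ge0 => i _; apply: powR_ge0.
have Sb0 : 0 <= Sb by apply: sumr_ge0 => i _; apply: powR_ge0.
set A := Sa `^ s^-1; set B := Sb `^ s^-1.
have A0 : 0 <= A by apply: powR_ge0.
have B0 : 0 <= B by apply: powR_ge0.
have [Ae|Apos] := eqVneq A 0.
  have az := sum0_pow _ _ _ s0 a0 Ae.
  rewrite Ae add0r; suff -> : \sum_i (a i + b i) `^ s = Sb by exact: lexx.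
  by apply: eq_bigr => i _; rewrite az add0r.
have [Be|Bpos] := eqVneq B 0.
  have bz := sum0_pow _ _ _ s0 b0 Be.
  rewrite Be addr0; suff -> : \sum_i (a i + b i) `^ s = Sa by exact: lexx.
  by apply: eq_bigr => i _; rewrite bz addr0.
have SaA : A `^ s = Sa by apply: powRsK.
have SbB : B `^ s = Sb by apply: powRsK.
clearbody A B.
have Ap : 0 < A by rewrite lt0r Apos A0.
have Bp : 0 < B by rewrite lt0r Bpos B0.
have AB : 0 < A + B by rewrite addr_gt0.
have Sap : 0 < Sa by rewrite -SaA powR_gt0.
have Sbp : 0 < Sb by rewrite -SbB powR_gt0.
set l := A / (A + B).
have l0 : 0 <= l by rewrite divr_ge0 // ltW.
have l1 : l <= 1 by rewrite ler_pdivrMr // mul1r lerDl.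
have key : forall i, (a i + b i) `^ s <=
    (A + B) `^ s * (l * (a i `^ s / Sa) + (1 - l) * (b i `^ s / Sb)).
  move=> i.
  have e : a i + b i = (A + B) * (l * (a i / A) + (1 - l) * (b i / B)).
    by rewrite /l; apply: decomp.
  have ea : a i `^ s / Sa = (a i / A) `^ s.
    rewrite -SaA; apply: (@mulIf _ (A `^ s)); first by rewrite gt_eqF // powR_gt0.
    rewrite mulfVK; last by rewrite gt_eqF // powR_gt0.
    rewrite -powRM; [by rewrite (mulfVK (lt0r_neq0 Ap)) | by rewrite divr_ge0 // ltW | exact: ltW].
  have eb : b i `^ s / Sb = (b i / B) `^ s.
    rewrite -SbB; apply: (@mulIf _ (B `^ s)); first by rewrite gt_eqF // powR_gt0.
    rewrite mulfVK; last by rewrite gt_eqF // powR_gt0.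
    rewrite -powRM; [by rewrite (mulfVK (lt0r_neq0 Bp)) | by rewrite divr_ge0 // ltW | exact: ltW].
  have c0 : 0 <= l * (a i / A) + (1 - l) * (b i / B).
    by rewrite addr_ge0 // mulr_ge0 // ?subr_ge0 // divr_ge0 // ltW.
  rewrite e (powRM _ (ltW AB) c0).
  rewrite ler_wpM2l ?powR_ge0 // ea eb; apply: conv2 => //; apply: divr_ge0 => //; apply: ltW.
have tot : \sum_i (a i + b i) `^ s <= (A + B) `^ s.
  apply: le_trans (ler_sum _ (fun i _ => key i)) _.
  rewrite -mulr_sumr big_split /= -!mulr_sumr -!mulr_suml.
  by rewrite -/Sa -/Sb !mulfV ?gt_eqF // !mulr1 subrKC mulr1.
rewrite -[A + B](@powRKs _ s _ s0 (ltW AB)).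
have si : 0 <= s^-1 by rewrite invr_ge0 ltW.
apply: (ge0_ler_powR si _ _ tot); rewrite nnegrE ?powR_ge0 //.
by apply: sumr_ge0 => i _; apply: powR_ge0.
Qed.

Lemma le_pow_self {R : realType} (s x : R) : 0 < s -> s <= 1 -> 0 <= x -> x <= 1 -> x <= x `^ s.
Proof.
move=> s0 s1 x0 x1; have [->|xp] := eqVneq x 0; first by rewrite powR_ge0.
apply: ger1_powR => //; rewrite x1 andbT lt_neqAle eq_sym xp //.
Qed.

Lemma subadd {R : realType} (s u v : R) : 0 < s -> s <= 1 -> 0 <= u -> 0 <= v ->
  (u + v) `^ s <= u `^ s + v `^ s.
Proof.
move=> s0 s1 u0 v0; have [e|tp] := eqVneq (u + v) 0.
  have u00 : u = 0 by apply/le_anti; rewrite u0 andbT -e lerDl.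
  have v00 : v = 0 by move: e; rewrite u00 add0r.
  by rewrite e u00 v00 powR0 ?gt_eqF // addr0.
have t0 : 0 < u + v by rewrite lt_neqAle eq_sym tp addr_ge0.
have tn : u + v != 0 := lt0r_neq0 t0.
have hu : u `^ s = (u + v) `^ s * (u / (u + v)) `^ s.
  rewrite -powRM; [by rewrite [(u + v) * _]mulrC (mulfVK tn) | exact: ltW | by rewrite divr_ge0 // ltW].
have hv : v `^ s = (u + v) `^ s * (v / (u + v)) `^ s.
  rewrite -powRM; [by rewrite [(u + v) * _]mulrC (mulfVK tn) | exact: ltW | by rewrite divr_ge0 // ltW].
rewrite hu hv -mulrDr.
have h1 : u / (u + v) <= 1 by rewrite ler_pdivrMr // mul1r lerDl.
have h2 : v / (u + v) <= 1 by rewrite ler_pdivrMr // mul1r lerDr.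
rewrite {1}(_ : (u + v) `^ s = (u + v) `^ s * (u / (u + v) + v / (u + v))); last first.
  by rewrite -mulrDl (mulfV tn) mulr1.
apply: ler_wpM2l; first exact: powR_ge0.
have hu0 : 0 <= u / (u + v) by rewrite divr_ge0 // ltW.
have hv0 : 0 <= v / (u + v) by rewrite divr_ge0 // ltW.
by apply: lerD; apply: le_pow_self.
Qed.

Lemma lsdistC {R : realType} {d : nat} (s : R) (x y : 'rV[R]_d) :
  lsdist s x y = lsdist s y x.
Proof. by rewrite /lsdist; under eq_bigr => i _ do rewrite distrC. Qed.

Lemma lsdist_tri {R : realType} {d : nat} (s : R) (x y z : 'rV[R]_d) : 0 < s ->
  lsdist s x z <= lsdist s x y + lsdist s y z.
Proof.
move=> s0; rewrite /lsdist.
have hsum : forall (F : 'I_d -> R), 0 <= \sum_i `|F i| `^ s.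
  by move=> F; apply: sumr_ge0 => i _; apply: powR_ge0.
have [s1|s1] := leP s 1.
  have -> : Num.min 1 s^-1 = 1.
    by apply/min_idPl; rewrite invf_ge1.
  rewrite !powRr1 ?hsum // -big_split /=; apply: ler_sum => i _.
  apply: le_trans _ (subadd _ _ _ s0 s1 (normr_ge0 _) (normr_ge0 _)).
  apply: (ge0_ler_powR (ltW s0)); rewrite ?nnegrE ?normr_ge0 ?addr_ge0 ?normr_ge0 //.
  exact: ler_distD.
have -> : Num.min 1 s^-1 = s^-1.
  by apply/min_idPr; rewrite invf_le1 // ltW.
apply: le_trans _ (@mink _ _ s (fun i => `|x ord0 i - y ord0 i|) (fun i => `|y ord0 i - z ord0 i|) (ltW s1) (fun i => normr_ge0 _) (fun i => normr_ge0 _)).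
have si : 0 <= s^-1 by rewrite invr_ge0 ltW.
apply: (ge0_ler_powR si); rewrite ?nnegrE ?hsum //.
  by apply: sumr_ge0 => i _; apply: powR_ge0.
apply: ler_sum => i _; apply: (ge0_ler_powR (ltW s0)); rewrite ?nnegrE ?normr_ge0 ?addr_ge0 ?normr_ge0 //.
exact: ler_distD.
Qed.

Lemma lsdist_gt0 {R : realType} {d : nat} (s : R) (x y : 'rV[R]_d) : 0 < s ->
  x != y -> 0 < lsdist s x y.
Proof.
move=> s0 xy; rewrite /lsdist; apply: powR_gt0.
case: (pickP (fun i => x ord0 i != y ord0 i)) => [i hi | H]; last first.
  have exy : x = y by apply/rowP => j; apply/eqP; move/negbFE: (H j).
  by move: xy; rewrite exy eqxx.
rewrite (bigD1 i) //=.
have t0 : 0 < `|x ord0 i - y ord0 i| `^ s by apply: powR_gt0; rewrite normr_gt0 subr_eq0.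
apply: (lt_le_trans t0); rewrite lerDl; apply: sumr_ge0 => j _; apply: powR_ge0.
Qed.

Lemma bigmin_mem {R : realType} (T : eqType) (F : T -> R) x0 (Q : seq T) a :
  a \in Q -> \big[Num.min/x0]_(p <- Q) F p <= F a.
Proof.
elim: Q => [//|h Q IH]; rewrite inE big_cons => /orP[/eqP ->|aQ].
  by rewrite ge_min lexx.
by rewrite ge_min IH ?orbT.
Qed.

Lemma setdist_le {R : realType} {d : nat} (s : R) (P : seq 'rV[R]_d) x p :
  p \in P -> p != x -> setdist s P x <= lsdist s x p.
Proof.
by move=> pP px; rewrite /setdist; apply: bigmin_mem; rewrite mem_filter px.
Qed.

Theorem lemma7 (R : realType) (d : nat) (s : R) (P : seq 'rV[R]_d)
    (eps : R) (q y : 'rV[R]_d) :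
  0 < s -> s <= 2 ->
  (2 <= size (undup P))%N ->
  0 < eps ->
  y \in epsNN s eps P q ->
  forall p : 'rV[R]_d,
    p \in RNN s P q -> ~ Pprime s eps P q y p -> p \in S2 s eps P q y.
Proof.
move=> s0 _ _ e0 hy p hp hnP.
move: hy; rewrite /epsNN /ball_pts inE /= => /andP[/andP[yP yq] Dle].
move: hp; rewrite /RNN inE /= => /andP[/andP[pP pq] hr].
set D := lsdist s q y in Dle *; set r := setdist s P p in hr *.
set b := 1 + eps in Dle *.
have b1 : 1 < b by rewrite /b ltrDl.
have b0 : 0 < b := lt_trans ltr01 b1.
have dqp : setdist s P q <= lsdist s q p by apply: setdist_le.
have Dr : D <= b * r.
  apply: (le_trans Dle); apply: ler_wpM2l; first exact: ltW.
  by apply: (le_trans dqp); rewrite lsdistC.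
have Dp : 0 < D by apply: lsdist_gt0; rewrite // eq_sym.
have rp : 0 < r by rewrite -(pmulr_rgt0 _ b0); exact: (lt_le_trans Dp Dr).
have lb : 0 < ln b by apply: ln_gt0.
set lr := ln r / ln b.
set i : int := Num.floor lr + 1.
have powE : forall z : int, ln (b ^ z) = z%:~R * ln b.
  by move=> z; rewrite -powR_intmul ?ltW // ln_powR.
have bz : forall z : int, 0 < b ^ z.
  by move=> z; rewrite -powR_intmul ?ltW // powR_gt0.
have hb : p \in bucket s eps P i.
  rewrite /bucket inE /= pP /=; apply/andP; split.
    rewrite -ler_ln ?posrE // powE -ler_pdivlMr // /i addrK; exact: floor_le.
  rewrite -ltr_ln ?posrE // powE -ltr_pdivrMr //; exact: floorD1_gt.
have lo_i : lo_idx s eps q y <= i.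
  rewrite /lo_idx /i lerD2r; apply: le_floor; rewrite /logb ler_pM2r ?invr_gt0 //.
  rewrite ler_ln ?posrE ?divr_gt0 // ler_pdivrMr // mulrC //.
have hi_i : hi_idx s eps q y < i.
  rewrite ltNge; apply/negP => hi; apply: hnP; exists i; split => //.
  by rewrite lo_i hi.
have Dr2 : D / eps <= r.
  move: hi_i; rewrite /hi_idx /i ltzD1 => hc.
  have : logb b (D / eps) <= lr.
    apply: le_trans (ceil_ge _) _; apply: le_trans (floor_le lr).
    by rewrite ler_int.
  rewrite /logb /lr ler_pM2r ?invr_gt0 // ler_ln ?posrE ?divr_gt0 //.
rewrite /S2 inE /= Dr2 andbT /Py inE /=.
have [//|py] := eqVneq p y; rewrite /epsRNN inE /= pP py /=.
apply: le_trans (lsdist_tri _ _ q _ s0) _.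
have : D <= eps * r by rewrite mulrC -ler_pdivrMr.
rewrite -/D /b mulrDl mul1r; apply: lerD => //.
Qed.
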